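(* Let $X$ be a connected separable $T_1$-space. Then for all but countably many points $x \in X$, the subspace $X\setminus\{x\}$ has at most two connected components. *)

(* Defs.v *)
Set Implicit Arguments.

Record TopSpace := {
  carrier :> Type;
  is_open : (carrier -> Prop) -> Prop;
  open_full : is_open (fun _ => True);
  open_inter : forall U V, is_open U -> is_open V -> is_open (fun x => U x /\ V x);
  open_union : forall (F : (carrier -> Prop) -> Prop),
      (forall U, F U -> is_open U) -> is_open (fun x => exists U, F U /\ U x)
}.

Section Topo.
Variable X : TopSpace.

Definition countable (A : X -> Prop) : Prop :=
  exists f : X -> nat, forall a b, A a -> A b -> f a = f b -> a = b.

Definition dense (D : X -> Prop) : Prop :=
  forall U, is_open X U -> (exists u, U u) -> exists d, U d /\ D d.

Definition separable : Prop := exists D, countable D /\ dense D.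

Definition T1 : Prop :=
  forall x y : X, x <> y -> exists U, is_open X U /\ U x /\ ~ U y.

(* S is connected in the subspace topology: its relatively open sets are the S ∩ U,
   and it cannot be split into two disjoint nonempty relatively open pieces. *)
Definition connected_set (S : X -> Prop) : Prop :=
  ~ exists U V, is_open X U /\ is_open X V /\
      (forall s, S s -> U s \/ V s) /\
      (exists s, S s /\ U s) /\ (exists s, S s /\ V s) /\
      (forall s, S s -> U s -> V s -> False).

Definition connected_space : Prop := connected_set (fun _ => True).

Definition is_component (Y C : X -> Prop) : Prop :=
  (forall c, C c -> Y c) /\ (exists c, C c) /\ connected_set C /\
  (forall D, (forall d, D d -> Y d) -> connected_set D ->
     (forall c, C c -> D c) -> forall d, D d -> C d).

Definition at_most_two_components (Y : X -> Prop) : Prop :=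
  forall C1 C2 C3, is_component Y C1 -> is_component Y C2 -> is_component Y C3 ->
    (forall z, C1 z <-> C2 z) \/ (forall z, C1 z <-> C3 z) \/ (forall z, C2 z <-> C3 z).

End Topo.

(* Main.v *)
Require Import Defs.
From Stdlib Require Import Classical ClassicalEpsilon Cantor.

Set Implicit Arguments.
Section S.
Variable X : TopSpace.

Definition tri (x : X) (U1 U2 U3 : X -> Prop) : Prop :=
  is_open X U1 /\ is_open X U2 /\ is_open X U3 /\ ~ U1 x /\ ~ U2 x /\ ~ U3 x /\
  (forall z, z <> x -> U1 z \/ U2 z \/ U3 z) /\
  (forall z, U1 z -> U2 z -> False) /\ (forall z, U1 z -> U3 z -> False) /\
  (forall z, U2 z -> U3 z -> False) /\
  (exists z, U1 z) /\ (exists z, U2 z) /\ (exists z, U3 z).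

Lemma tri12 x U1 U2 U3 : tri x U1 U2 U3 -> tri x U2 U1 U3.
Proof.
  unfold tri; intros (H1&H2&H3&H4&H5&H6&H7&H8&H9&H10&H11&H12&H13).
  repeat split; auto.
  - intros z hz; destruct (H7 z hz) as [?|[?|?]]; tauto.
  - intros z a b; eauto.
Qed.

Lemma tri13 x U1 U2 U3 : tri x U1 U2 U3 -> tri x U3 U2 U1.
Proof.
  unfold tri; intros (H1&H2&H3&H4&H5&H6&H7&H8&H9&H10&H11&H12&H13).
  repeat split; auto.
  - intros z hz; destruct (H7 z hz) as [?|[?|?]]; tauto.
  - intros z a b; eauto.
  - intros z a b; eauto.
  - intros z a b; eauto.
Qed.

Lemma open_or (A B : X -> Prop) : is_open X A -> is_open X B ->
  is_open X (fun z => exists W, (W = A \/ W = B) /\ W z).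
Proof.
  intros hA hB. apply open_union. intros W [->| ->]; auto.
Qed.

Lemma S_conn x U1 U2 U3 : connected_space X -> tri x U1 U2 U3 ->
  connected_set X (fun z => z = x \/ U2 z \/ U3 z).
Proof.
  intros hX (H1&H2&H3&H4&H5&H6&H7&H8&H9&H10&H11&H12&H13).
  intros (P & Q & hP & hQ & hcov & [s1 [hs1 hPs]] & [s2 [hs2 hQs]] & hdis).
  (* wlog x in P *)
  assert (gen : forall P Q, is_open X P -> is_open X Q ->
     (forall s, s = x \/ U2 s \/ U3 s -> P s \/ Q s) ->
     (exists s, (s = x \/ U2 s \/ U3 s) /\ Q s) ->
     (forall s, s = x \/ U2 s \/ U3 s -> P s -> Q s -> False) -> P x -> False).
  { clear P Q hP hQ hcov s1 hs1 hPs s2 hs2 hQs hdis.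
    intros P Q hP hQ hcov [s [hs hQs]] hdis hPx.
    apply hX.
    exists (fun z => exists W, (W = U1 \/ W = P) /\ W z).
    exists (fun z => Q z /\ (exists W, (W = U2 \/ W = U3) /\ W z)).
    split; [apply open_or; auto|].
    split; [apply open_inter; auto; apply open_or; auto|].
    split.
    { intros z _. destruct (classic (z = x)) as [->|hzx].
      - left. exists P; auto.
      - destruct (H7 z hzx) as [h|[h|h]].
        + left; exists U1; auto.
        + destruct (hcov z (or_intror (or_introl h))) as [h'|h'].
          * left; exists P; auto.
          * right; split; auto; exists U2; auto.
        + destruct (hcov z (or_intror (or_intror h))) as [h'|h'].
          * left; exists P; auto.
          * right; split; auto; exists U3; auto. }
    split. { exists x; split; auto. exists P; auto. }
    split.
    { exists s; split; auto. split; auto.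
      destruct hs as [->|[h|h]].
      - exfalso; apply (hdis x); auto.
      - exists U2; auto.
      - exists U3; auto. }
    intros z _ [W [[-> | ->] hW]] [hQz [W' [[-> | ->] hW']]].
    - eauto.
    - eauto.
    - apply (hdis z); auto.
    - apply (hdis z); auto. }
  destruct (hcov x (or_introl eq_refl)) as [hx|hx].
  - apply (gen P Q); eauto.
  - apply (gen Q P); eauto.
    intros s hs; destruct (hcov s hs); auto.
Qed.

Lemma key x y U1 U2 U3 V1 V2 V3 d2 d3 : connected_space X ->
  tri x U1 U2 U3 -> tri y V1 V2 V3 -> x <> y ->
  U2 d2 -> V2 d2 -> U3 d3 -> V3 d3 -> ~ U2 y -> ~ U3 y -> False.
Proof.
  intros hX hx hy hxy a b c d e g.
  pose proof (S_conn hX hx) as hS.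
  destruct hy as (H1&H2&H3&H4&H5&H6&H7&H8&H9&H10&H11&H12&H13).
  apply hS.
  exists V2, (fun z => exists W, (W = V1 \/ W = V3) /\ W z).
  split; auto. split; [apply open_or; auto|].
  assert (ny : forall s, s = x \/ U2 s \/ U3 s -> s <> y).
  { intros s [->|[h|h]] ->; tauto. }
  split.
  { intros s hs. destruct (H7 s (ny s hs)) as [h|[h|h]].
    - right; exists V1; auto.
    - left; auto.
    - right; exists V3; auto. }
  split. { exists d2; auto. }
  split. { exists d3; split; auto. exists V3; auto. }
  intros s _ h [W [[-> | ->] hW]]; eauto.
Qed.

Definition Ox (x : X) := fun z => exists W, (is_open X W /\ ~ W x) /\ W z.

Lemma Ox_open x : is_open X (Ox x).
Proof. apply open_union. tauto. Qed.

Lemma Ox_spec x z : T1 X -> (Ox x z <-> z <> x).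
Proof.
  intros hT; split.
  - intros [W [[_ h] hz]] ->; auto.
  - intros h. destruct (hT z x h) as [W [? [? ?]]]. exists W; auto.
Qed.

Lemma bad_tri x : connected_space X -> T1 X ->
  ~ at_most_two_components X (fun y => y <> x) ->
  exists U1 U2 U3, tri x U1 U2 U3.
Proof.
  intros hX hT hbad.
  apply NNPP; intro hno. apply hbad.
  destruct (classic (connected_set X (fun y => y <> x))) as [hc|hc].
  { intros C1 C2 C3 h1 h2 h3. left. intros z.
    destruct h1 as (a1&_&_&m1). destruct h2 as (a2&_&_&m2).
    split; intro hz.
    - apply (m2 (fun y => y <> x)); eauto.
    - apply (m1 (fun y => y <> x)); eauto. }
  apply NNPP in hc.
  destruct hc as (U & V & hU & hV & hcov & [u [hu1 hu2]] & [v [hv1 hv2]] & hdis).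
  set (A := fun z => U z /\ Ox x z). set (B := fun z => V z /\ Ox x z).
  assert (oA : is_open X A) by (apply open_inter; auto using Ox_open).
  assert (oB : is_open X B) by (apply open_inter; auto using Ox_open).
  assert (xA : ~ A x) by (intros [_ h]; apply (Ox_spec x x hT) in h; auto).
  assert (xB : ~ B x) by (intros [_ h]; apply (Ox_spec x x hT) in h; auto).
  assert (cAB : forall z, z <> x -> A z \/ B z).
  { intros z hz. pose proof (proj2 (Ox_spec x z hT) hz).
    destruct (hcov z hz); [left|right]; split; auto. }
  assert (dAB : forall z, A z -> B z -> False).
  { intros z [a h] [b _]. apply (hdis z); auto. apply (Ox_spec x z hT); auto. }
  assert (nA : exists z, A z) by (exists u; split; auto; apply Ox_spec; auto).
  assert (nB : exists z, B z) by (exists v; split; auto; apply Ox_spec; auto).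
  assert (Asub : forall z, A z -> z <> x) by (intros z h ->; auto).
  assert (Bsub : forall z, B z -> z <> x) by (intros z h ->; auto).
  assert (split3 : forall A B, is_open X A -> is_open X B -> ~ A x -> ~ B x ->
     (forall z, z <> x -> A z \/ B z) -> (forall z, A z -> B z -> False) ->
     (exists z, A z) -> (exists z, B z) -> ~ connected_set X B -> False).
  { clear - hno. intros A B oA oB xA xB cAB dAB nA nB hB.
    apply NNPP in hB.
    destruct hB as (P & Q & hP & hQ & hc & [p [hp1 hp2]] & [q [hq1 hq2]] & hd).
    apply hno. exists A, (fun z => B z /\ P z), (fun z => B z /\ Q z).
    repeat split; auto using open_inter.
    - intros []; auto.
    - intros []; auto.
    - intros z hz. destruct (cAB z hz) as [h|h]; auto.
      destruct (hc z h); tauto.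
    - intros z a [b _]; eauto.
    - intros z a [b _]; eauto.
    - intros z [a b] [_ c]; eauto.
    - exists p; auto.
    - exists q; auto. }
  assert (cA : connected_set X A).
  { apply NNPP; intro h. apply (split3 B A); auto.
    - intros z hz; destruct (cAB z hz); auto.
    - intros z a b; eauto. }
  assert (cB : connected_set X B) by (apply NNPP; intro h; apply (split3 A B); auto).
  assert (comp : forall C, is_component X (fun y => y <> x) C ->
     (forall z, C z <-> A z) \/ (forall z, C z <-> B z)).
  { intros C (hsub & [c hc] & hcon & hmax).
    destruct (cAB c (hsub c hc)) as [h|h].
    - left. assert (CA : forall z, C z -> A z).
      { intros z hz. apply NNPP; intro nz. apply hcon.
        exists A, B. refine (conj oA (conj oB (conj _ (conj _ (conj _ _))))).
        - intros s hs; apply cAB; auto.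
        - exists c; auto.
        - exists z; split; auto. destruct (cAB z (hsub z hz)); tauto.
        - intros s _; apply dAB. }
      intro z; split; auto. apply (hmax A); auto.
    - right. assert (CB : forall z, C z -> B z).
      { intros z hz. apply NNPP; intro nz. apply hcon.
        exists B, A. refine (conj oB (conj oA (conj _ (conj _ (conj _ _))))).
        - intros s hs; destruct (cAB s (hsub s hs)); auto.
        - exists c; auto.
        - exists z; split; auto. destruct (cAB z (hsub z hz)); tauto.
        - intros s _ a b; eauto. }
      intro z; split; auto. apply (hmax B); auto. }
  intros C1 C2 C3 h1 h2 h3.
  destruct (comp C1 h1) as [e1|e1]; destruct (comp C2 h2) as [e2|e2];
  destruct (comp C3 h3) as [e3|e3];
  first [ left; intro z; rewrite e1, e2; tauto
        | right; left; intro z; rewrite e1, e3; tauto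
        | right; right; intro z; rewrite e2, e3; tauto ].
Qed.

End S.

Theorem theorem7p3 (X : TopSpace) :
  connected_space X -> separable X -> T1 X ->
  @countable X (fun x : X => ~ @at_most_two_components X (fun y : X => y <> x)).
Proof.
  intros hX [D [[f hf] hD]] hT.
  set (P := fun (x : X) (t : nat * nat * nat) =>
    exists (U1 U2 U3 : X -> Prop) (d1 d2 d3 : X), @tri X x U1 U2 U3 /\ U1 d1 /\ U2 d2 /\ U3 d3 /\
      D d1 /\ D d2 /\ D d3 /\ t = (f d1, f d2, f d3)).
  set (g := fun x => epsilon (inhabits (0,0,0)) (P x)).
  assert (gP : forall x, ~ at_most_two_components X (fun y => y <> x) -> P x (g x)).
  { intros x hb. apply epsilon_spec.
    destruct (bad_tri hX hT hb) as (U1 & U2 & U3 & ht).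
    pose proof ht as (H1&H2&H3&_&_&_&_&_&_&_&H11&H12&H13).
    destruct (hD U1 H1 H11) as [d1 [? ?]].
    destruct (hD U2 H2 H12) as [d2 [? ?]].
    destruct (hD U3 H3 H13) as [d3 [? ?]].
    exists (f d1, f d2, f d3), U1, U2, U3, d1, d2, d3; split; [exact ht | repeat split; auto]. }
  exists (fun x => let '(a, b, c) := g x in to_nat (a, to_nat (b, c))).
  intros x y hx hy e.
  pose proof (gP x hx) as (U1 & U2 & U3 & d1 & d2 & d3 & hU & u1 & u2 & u3 & D1 & D2 & D3 & ex).
  pose proof (gP y hy) as (V1 & V2 & V3 & e1 & e2 & e3 & hV & v1 & v2 & v3 & E1 & E2 & E3 & ey).
  cbv beta in e. rewrite ex, ey in e. cbv beta iota in e.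
  apply (f_equal of_nat) in e. rewrite !cancel_of_to in e.
  pose proof (f_equal fst e) as e1'. pose proof (f_equal snd e) as e'.
  cbn [fst snd] in e1', e'.
  apply (f_equal of_nat) in e'. rewrite !cancel_of_to in e'.
  pose proof (f_equal fst e') as e2'. pose proof (f_equal snd e') as e3'.
  cbn [fst snd] in e2', e3'.
  apply hf in e1'; auto. apply hf in e2'; auto. apply hf in e3'; auto.
  subst e1 e2 e3.
  apply NNPP; intro hxy.
  pose proof hU as (_&_&_&_&_&_&C&I12&I13&I23&_).
  destruct (C y (fun h => hxy (eq_sym h))) as [h|[h|h]].
  - apply (@key X x y U1 U2 U3 V1 V2 V3 d2 d3 hX hU hV hxy u2 v2 u3 v3); eauto.
  - apply (@key X x y U2 U1 U3 V2 V1 V3 d1 d3 hX (tri12 hU) (tri12 hV) hxy u1 v1 u3 v3); eauto.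
  - apply (@key X x y U3 U2 U1 V3 V2 V1 d2 d1 hX (tri13 hU) (tri13 hV) hxy u2 v2 u1 v1); eauto.
Qed.
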